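(* Let $n\ge r\ge 1$ and let $Q=(q_{ij})\in\mathcal P_r(n)$. Then \[ \sum_{1\le i<j\le n}\min(q_{ij},0)\ \ge\ -\frac{\beta_r\, n}{4}. \]
   Context: For integers $N\ge r\ge 1$, let $\mathcal P_r(N)=\{Q\in\mathbb R^{N\times N}: Q^2=Q,\ Q^T=Q,\ \operatorname{rank}Q=r\}$ be the set of rank-$r$ orthogonal projections. Define \[ \beta_r(N)=\frac1N\max_{Q\in\mathcal P_r(N)}\sum_{i,j=1}^N |q_{ij}|,\qquad \beta_r=\sup_{N\ge r}\beta_r(N), \] where $Q=(q_{ij})$. *)

(* Defs.v *)
From HB Require Import structures.
From mathcomp Require Import all_boot all_order all_algebra.
From mathcomp Require Import boolp classical_sets reals.
Set Implicit Arguments. Unset Strict Implicit. Unset Printing Implicit Defensive.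
Import Order.TTheory GRing.Theory Num.Theory.
Local Open Scope ring_scope.
Local Open Scope classical_set_scope.

(* Q is in P_r(N): a rank-r orthogonal projection in R^{N x N}. *)
Definition is_rank_proj (R : realType) (N r : nat) (Q : 'M[R]_N) : Prop :=
  Q *m Q = Q /\ Q^T = Q /\ \rank Q = r.

Definition l1_entries (R : realType) (N : nat) (Q : 'M[R]_N) : R :=
  \sum_(i < N) \sum_(j < N) `|Q i j|.

(* beta_r(N) = (1/N) max_{Q in P_r(N)} sum |q_ij|  (the max is attained,
   P_r(N) being compact, so it equals the supremum). *)
Definition beta_rN (R : realType) (r N : nat) : R :=
  sup [set x : R | exists Q : 'M[R]_N, is_rank_proj r Q /\ x = N%:R^-1 * l1_entries Q].

Definition beta_r (R : realType) (r : nat) : R :=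
  sup [set x : R | exists N : nat, (r <= N)%N /\ x = beta_rN R r N].

(* Main.v *)
Require Import Defs.
From HB Require Import structures.
From mathcomp Require Import all_boot all_order all_algebra.
From mathcomp Require Import boolp classical_sets reals.
From mathcomp Require Import lra.
Import Order.TTheory GRing.Theory Num.Theory.
Local Open Scope ring_scope.
Set Implicit Arguments. Unset Strict Implicit.

Lemma trace_fact (F : fieldType) (n k : nat) (Q : 'M[F]_n) (A : 'M[F]_(n,k))
  (B : 'M[F]_(k,n)) L M :
  Q *m Q = Q -> A *m B = Q -> L *m A = 1%:M -> B *m M = 1%:M -> \tr Q = k%:R.
Proof.
move=> QQ AB LA BM.
have BA : B *m A = 1%:M.
  have -> : B *m A = L *m (A *m B) *m (A *m B) *m M.
    by rewrite !mulmxA LA mul1mx -!mulmxA BM mulmx1.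
  rewrite AB; have -> : L *m Q *m Q = L *m Q by rewrite -mulmxA QQ.
  by rewrite -AB !mulmxA LA mul1mx BM.
by rewrite -AB mxtrace_mulC BA mxtrace1.
Qed.

Lemma trace_rank_idem (F : fieldType) (n : nat) (Q : 'M[F]_n) :
  Q *m Q = Q -> \tr Q = (\rank Q)%:R.
Proof.
move=> QQ.
have [L LA] : exists L, L *m col_base Q = 1%:M by apply/row_fullP; exact: col_base_full.
have [M BM] : exists M, row_base Q *m M = 1%:M by apply/row_freeP; exact: row_base_free.
exact: (@trace_fact F n (\rank Q) Q _ _ L M QQ (mulmx_base Q) LA BM).
Qed.

Lemma diag_sq (R : realType) (n : nat) (Q : 'M[R]_n) :
  Q *m Q = Q -> Q^T = Q -> forall i, Q i i = \sum_j Q i j ^+ 2.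
Proof.
move=> QQ QT i.
rewrite -{1}QQ mxE; apply: eq_bigr => j _.
by rewrite expr2 -{2}QT mxE.
Qed.

Lemma sumsq_rank (R : realType) (n r : nat) (Q : 'M[R]_n) :
  is_rank_proj r Q -> \sum_i \sum_j Q i j ^+ 2 = r%:R.
Proof.
move=> [QQ [QT rk]].
rewrite -rk -trace_rank_idem // /mxtrace.
by apply: eq_bigr => i _; rewrite (diag_sq QQ QT).
Qed.

Lemma l1_bound (R : realType) (N r : nat) (Q : 'M[R]_N) :
  is_rank_proj r Q -> N%:R^-1 * l1_entries Q <= (r%:R + 1) / 2.
Proof.
move=> HQ.
case: N Q HQ => [|N] Q HQ.
  by rewrite /l1_entries big_ord0 mulr0; apply: divr_ge0; rewrite ?addr_ge0 ?ler0n.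
have Npos : 0 < N.+1%:R :> R by rewrite ltr0n.
have key : forall x : R, 2 * N.+1%:R * `|x| <= N.+1%:R ^+ 2 * x ^+ 2 + 1.
  move=> x; have h := sqr_ge0 (N.+1%:R * `|x| - 1).
  rewrite -[x ^+ 2]real_normK ?num_real //.
  move: h; set a := `|x|; set m := N.+1%:R; move=> h; nra.
have S0 : 2 * N.+1%:R * l1_entries Q <=
    \sum_i \sum_j (N.+1%:R ^+ 2 * Q i j ^+ 2 + 1).
  rewrite /l1_entries mulr_sumr; apply: ler_sum => i _.
  rewrite mulr_sumr; apply: ler_sum => j _; exact: key.
have E : \sum_i \sum_j (N.+1%:R ^+ 2 * Q i j ^+ 2 + 1) =
    N.+1%:R ^+ 2 * r%:R + N.+1%:R ^+ 2 :> R.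
  have ones : \sum_(i < N.+1) \sum_(j < N.+1) (1 : R) = N.+1%:R ^+ 2.
    by rewrite !big_const_ord !iter_addr_0 expr2 mulr_natr.
  under eq_bigr => i _ do rewrite big_split.
  rewrite big_split /= ones -(sumsq_rank HQ) mulr_sumr; congr (_ + _).
  by apply: eq_bigr => i _; rewrite mulr_sumr.
have S := S0; rewrite E in S.
rewrite ler_pdivlMr // mulrC mulrCA ler_pdivrMl // -(ler_pM2l Npos).
move: S; set l := l1_entries Q; set n := N.+1%:R => S.
rewrite expr2 in S; lra.
Qed.
Local Open Scope classical_set_scope.

Lemma beta_rN_le (R : realType) (r N : nat) : beta_rN R r N <= (r%:R + 1) / 2.
Proof.
rewrite /beta_rN; set S := [set x : R | _].
have [[x Sx]|ne] := pselect (S !=set0).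
  apply: ge_sup; first by exists x.
  by move=> y [Q [HQ ->]]; exact: l1_bound.
have -> : S = set0.
  by apply/seteqP; split=> y Sy //; exfalso; apply: ne; exists y.
by rewrite sup0; apply: divr_ge0; rewrite ?addr_ge0 ?ler0n.
Qed.

Lemma beta_rN_ub (R : realType) (r N : nat) (Q : 'M[R]_N) :
  is_rank_proj r Q -> N%:R^-1 * l1_entries Q <= beta_rN R r N.
Proof.
move=> HQ; rewrite /beta_rN; apply: ub_le_sup; last by exists Q.
by exists ((r%:R + 1) / 2) => y [Q' [HQ' ->]]; exact: l1_bound.
Qed.

Lemma beta_r_ge (R : realType) (r N : nat) : (r <= N)%N -> beta_rN R r N <= beta_r R r.
Proof.
move=> rN; rewrite /beta_r; apply: ub_le_sup; last by exists N.
by exists ((r%:R + 1) / 2) => y [M [_ ->]]; exact: beta_rN_le.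
Qed.

Lemma sum_nonneg (R : realType) (n : nat) (Q : 'M[R]_n) :
  Q *m Q = Q -> Q^T = Q -> 0 <= \sum_i \sum_j Q i j.
Proof.
move=> QQ QT.
have -> : \sum_i \sum_j Q i j = \sum_k (\sum_i Q k i) ^+ 2.
  transitivity (\sum_i \sum_j \sum_k Q k i * Q k j).
    apply: eq_bigr => i _; apply: eq_bigr => j _.
    rewrite -{1}QQ mxE; apply: eq_bigr => k _.
    by rewrite -{1}QT mxE.
  under eq_bigr => i _ do rewrite exchange_big /=.
  rewrite exchange_big /=; apply: eq_bigr => k _.
  rewrite expr2 mulr_suml; apply: eq_bigr => i _.
  by rewrite mulr_sumr.
by apply: sumr_ge0 => k _; exact: sqr_ge0.
Qed.

Lemma abs_min (R : realType) (x : R) : x = `|x| + 2 * Num.min x 0.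
Proof.
have [h|h] := lerP 0 x.
  by rewrite ger0_norm //; lra.
by rewrite ltr0_norm //; lra.
Qed.

Lemma split_sym (R : realType) (n : nat) (f : 'I_n -> 'I_n -> R) :
  (forall i j : 'I_n, f i j = f j i) ->
  \sum_(i < n) \sum_(j < n) f i j =
    2 * \sum_(i < n) \sum_(j < n | (i < j)%N) f i j + \sum_(i < n) f i i.
Proof.
move=> fs.
have row : forall i : 'I_n, \sum_(j < n) f i j =
   \sum_(j < n | (i < j)%N) f i j + \sum_(j < n | (j < i)%N) f i j + f i i.
  move=> i; rewrite (bigID (fun j : 'I_n => (i < j)%N)) /= -addrA; congr (_ + _).
  rewrite (bigD1 i) /= ?ltnn // addrC; congr (_ + _).
  apply: eq_bigl => j; rewrite -leqNgt; case: ltngtP => ij //=.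
  - by apply/eqP => e; move: ij; rewrite e ltnn.
  - by apply/negbTE; rewrite negbK; apply/eqP; apply: val_inj; rewrite /= ij.
rewrite (eq_bigr _ (fun i _ => row i)) big_split big_split /=; congr (_ + _).
have -> : \sum_(i < n) \sum_(j < n | (j < i)%N) f i j =
          \sum_(i < n) \sum_(j < n | (i < j)%N) f i j.
  rewrite (exchange_big_dep xpredT) //=; apply: eq_bigr => i _.
  by apply: eq_big => [j|j _] //; exact: fs.
by rewrite mulr2n mulrDl mul1r.
Qed.

Theorem mainTheorem2 (R : realType) (n r : nat) (Q : 'M[R]_n) :
  (1 <= r)%N -> (r <= n)%N -> is_rank_proj r Q ->
  \sum_(i < n) \sum_(j < n | (i < j)%N) Num.min (Q i j) 0
    >= - (beta_r R r * n%:R / 4).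
Proof.
move=> r1 rn HQ; have [QQ [QT _]] := HQ.
have n0 : 0 < n%:R :> R by rewrite ltr0n; apply: leq_trans rn.
have sym : forall i j : 'I_n, Num.min (Q i j) 0 = Num.min (Q j i) 0.
  by move=> i j; rewrite -{1}QT mxE.
have Hsplit := split_sym sym.
have diag0 : \sum_(i < n) Num.min (Q i i) 0 = 0.
  apply: big1 => i _; rewrite min_r //.
  by rewrite (diag_sq QQ QT); apply: sumr_ge0 => j _; exact: sqr_ge0.
have total : \sum_(i < n) \sum_(j < n) Q i j =
    l1_entries Q + 2 * \sum_(i < n) \sum_(j < n) Num.min (Q i j) 0.
  rewrite /l1_entries mulr_sumr -big_split; apply: eq_bigr => i _.
  rewrite mulr_sumr -big_split; apply: eq_bigr => j _; exact: abs_min.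
have nn := sum_nonneg QQ QT.
have lb := le_trans (beta_rN_ub HQ) (beta_r_ge R rn).
rewrite ler_pdivrMl // in lb.
move: Hsplit total nn lb => /= Hsplit; rewrite diag0 in Hsplit; move: Hsplit.
move=> H1 H2 H3 H4; lra.
Qed.
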